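(* Let $\Gamma\subset\mathbb{N}$ be a numerical semigroup of multiplicity (smallest nonzero element) at least $3$, with set of gaps $L=\mathbb{N}\setminus\Gamma$ and genus $\delta=|L|$, and let $\mathcal{O}=\k[\Gamma]$ be the ring of the monomial curve. Then for every $k\ge1$ \[d_k=\dim_\k\operatorname{Coker}\big(\operatorname{Hom}_{\mathcal{O}}(\omega^{\otimes k},\mathcal{O})\to\mathcal{O}\big)=|(k+1)L|+(2k+1)-\delta.\] Consequently $d_k>2k\delta$ if and only if $|(k+1)L|>(2k+1)(\delta-1)$.
   Context: Ground field $\k$ algebraically closed, characteristic $0$. $\k[\Gamma]=\bigoplus_{a\in\Gamma}\k t^a\subset K=\k((t))$ (or its localisation/completion). $(k+1)L$ denotes the sumset $L+\dots+L$ ($k+1$ summands) and $|\cdot|$ its cardinality. The dualising module is embedded in $K$ via $dt\mapsto 1$, giving the fractional ideal $\omega$ spanned by $\k[[t]]$ and the monomials $t^{-\ell-1}$, $\ell\in L$. The invariant $d_k$ is $\dim_\k\mathcal{O}/(\mathcal{O}:_K\omega^k)$, where $\omega^k$ is the $k$-th power of this fractional ideal and $\mathcal{O}:_K\omega^k=\{x\in K: x\omega^k\subset\mathcal{O}\}$ (the image of $\operatorname{Hom}(\omega^{\otimes k},\mathcal{O})$ in $\mathcal{O}$). *)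

(* Defs.v *)
From HB Require Import structures.
From mathcomp Require Import all_boot all_order all_algebra.
Set Implicit Arguments. Unset Strict Implicit. Unset Printing Implicit Defensive.
Import GRing.Theory.
Local Open Scope ring_scope.

(* Gamma = N \ L.  L is a gap set of a numerical semigroup iff it is a finite
   (duplicate-free) list with 0 not a gap and N \ L closed under addition.      *)
Definition numerical_gaps (L : seq nat) : Prop :=
  [/\ uniq L, (0 \notin L)%N & forall a b : nat, a \notin L -> b \notin L -> (a + b)%N \notin L].

Definition sumset (A B : seq nat) : seq nat := undup [seq (a + b)%N | a <- A, b <- B].
(* iter_sumset k L = (k+1)L = L + ... + L  (k+1 summands) *)
Fixpoint iter_sumset (k : nat) (L : seq nat) : seq nat :=
  if k is k'.+1 then sumset L (iter_sumset k' L) else undup L.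

Section Laurent.
Variable F : fieldType.
Variable L : seq nat.

(* Laurent polynomials t^{-N} p(t), represented as pairs (N, p). *)
Definition laur := (nat * {poly F})%type.
Definition lmul (x y : laur) : laur := ((x.1 + y.1)%N, x.2 * y.2).
Definition ladd (x y : laur) : laur :=
  ((x.1 + y.1)%N, x.2 * 'X^(y.1) + y.2 * 'X^(x.1)).
Definition lscale (c : F) (x : laur) : laur := (x.1, c *: x.2).
Definition lzero : laur := (0%N, 0).
Definition lone : laur := (0%N, 1).
(* equality of the represented elements of k((t)) *)
Definition lequiv (x y : laur) : bool := x.2 * 'X^(y.1) == y.2 * 'X^(x.1).
Definition lprod (s : seq laur) : laur := foldr lmul lone s.
Definition lsum (s : seq laur) : laur := foldr ladd lzero s.
Definition lcomb (c : seq F) (b : seq laur) : laur :=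
  lsum [seq lscale p.1 p.2 | p <- zip c b].

(* x lies in O = k[Gamma]: every monomial t^e occurring in x has e in Gamma *)
Definition in_kGamma (x : laur) : bool :=
  all (fun i => (x.2`_i != 0) ==> ((x.1 <= i)%N && ((i - x.1)%N \notin L)))
      (iota 0 (size x.2)).

(* x lies in omega = span of k[t] and the t^{-l-1}, l in L:
   every exponent e occurring in x satisfies e >= 0 or -e-1 in L *)
Definition in_omega (x : laur) : bool :=
  all (fun i => (x.2`_i != 0) ==> ((x.1 <= i)%N || ((x.1 - i).-1 \in L)))
      (iota 0 (size x.2)).

Definition in_omega_pow (k : nat) (y : laur) : Prop :=
  exists s : seq (seq laur),
    all (fun r => (size r == k) && all in_omega r) s /\ lequiv y (lsum (map lprod s)).

(* x lies in O :_K omega^k *)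
Definition in_colon (k : nat) (x : laur) : Prop :=
  forall y, in_omega_pow k y -> in_kGamma (lmul x y).

(* dim_k (A / B) = n, for k-subspaces B of A of the Laurent ring:
   there is a family b_1..b_n in A whose classes form a basis of A/B *)
Definition quot_dim (A B : laur -> Prop) (n : nat) : Prop :=
  exists b : seq laur,
    [/\ size b = n, (forall v, v \in b -> A v),
        (forall x, A x -> exists (c : seq F) (y : laur),
              [/\ size c = n, B y & lequiv x (ladd (lcomb c b) y)])
      & (forall c : seq F, size c = n -> B (lcomb c b) -> forall i, c`_i = 0)].

(* d_k = dim_k O / (O :_K omega^k) *)
Definition is_dk (k n : nat) : Prop :=
  quot_dim (fun x => in_kGamma x) (in_colon k) n.

End Laurent.

(* Main.v *)
Require Import Defs.
From HB Require Import structures.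
From mathcomp Require Import all_boot all_order all_algebra.
From mathcomp Require Import zify ring.
Set Implicit Arguments. Unset Strict Implicit. Unset Printing Implicit Defensive.
Import GRing.Theory Num.Theory.
Local Open Scope ring_scope.

Section LC.
Variable F : fieldType.

Definition lc (x : laur F) (e : int) : F :=
  if (0 <= e + (x.1)%:Z) then x.2`_(absz (e + (x.1)%:Z)) else 0.

Lemma lcE (x : laur F) (i : nat) : lc x (i%:Z - (x.1)%:Z) = x.2`_i.
Proof.
rewrite /lc; have -> : i%:Z - (x.1)%:Z + (x.1)%:Z = i%:Z by ring.
by [].
Qed.

Lemma lc_shift (x : laur F) (n : nat) (e : int) :
  0 <= e + (x.1)%:Z + n%:Z ->
  (x.2 * 'X^n)`_(absz (e + (x.1)%:Z + n%:Z)) = lc x e.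
Proof.
move=> H; rewrite coefMXn /lc.
case: ifP => [Hlt|Hlt].
  have -> : (0 <= e + (x.1)%:Z) = false by apply/negbTE; lia.
  by [].
have -> : (0 <= e + (x.1)%:Z) = true by lia.
congr (_ `_ _); lia.
Qed.

Lemma lequivP (x y : laur F) : reflect (forall e, lc x e = lc y e) (lequiv x y).
Proof.
apply: (iffP eqP) => [H e|H].
  case: (boolP (0 <= e + (x.1)%:Z + (y.1)%:Z)) => He.
    rewrite -(lc_shift He).
    have He' : 0 <= e + (y.1)%:Z + (x.1)%:Z by lia.
    rewrite -(lc_shift He') H; congr (_ `_ _); lia.
  rewrite /lc; have -> : (0 <= e + (x.1)%:Z) = false by apply/negbTE; lia.
  have -> : (0 <= e + (y.1)%:Z) = false by apply/negbTE; lia.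
  by [].
apply/polyP => i.
have E1 : i = absz ((i%:Z - (x.1)%:Z - (y.1)%:Z) + (x.1)%:Z + (y.1)%:Z) by lia.
have E2 : i = absz ((i%:Z - (x.1)%:Z - (y.1)%:Z) + (y.1)%:Z + (x.1)%:Z) by lia.
rewrite {1}E1 lc_shift; last by lia.
rewrite [in RHS]E2 lc_shift ?H //; lia.
Qed.

Lemma lc_add (x y : laur F) e : lc (ladd x y) e = lc x e + lc y e.
Proof.
case: (boolP (0 <= e + (x.1)%:Z + (y.1)%:Z)) => He.
  rewrite {1}/lc /ladd /=.
  have -> : (0 <= e + (x.1 + y.1)%N%:Z) = true by lia.
  rewrite coefD.
  have -> : (e + (x.1 + y.1)%N%:Z) = e + (x.1)%:Z + (y.1)%:Z by lia.
  rewrite lc_shift //.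
  have -> : (e + (x.1)%:Z + (y.1)%:Z) = e + (y.1)%:Z + (x.1)%:Z by ring.
  rewrite lc_shift //; lia.
rewrite /lc /ladd /=.
have -> : (0 <= e + (x.1 + y.1)%N%:Z) = false by apply/negbTE; lia.
have -> : (0 <= e + (x.1)%:Z) = false by apply/negbTE; lia.
have -> : (0 <= e + (y.1)%:Z) = false by apply/negbTE; lia.
by rewrite addr0.
Qed.

Lemma lc_scale c (x : laur F) e : lc (lscale c x) e = c * lc x e.
Proof. by rewrite /lc /lscale /=; case: ifP; rewrite ?coefZ ?mulr0. Qed.

Lemma lc_zero e : lc (lzero F) e = 0.
Proof. by rewrite /lc /=; case: ifP; rewrite ?coef0. Qed.

Lemma lc_one e : lc (lone F) e = (e == 0)%:R.
Proof.
rewrite /lc /= addr0; case: ifP => H; rewrite ?coef1.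
  by congr (_%:R); case: eqP => H1; case: eqP => H2 //; exfalso; lia.
by have -> : (e == 0) = false by apply/negbTE; lia.
Qed.

Lemma lc_sum (s : seq (laur F)) e : lc (lsum s) e = \sum_(x <- s) lc x e.
Proof.
elim: s => [|x s IH]; first by rewrite big_nil lc_zero.
by rewrite big_cons /= lc_add IH.
Qed.

Lemma lc_comb (c : seq F) (b : seq (laur F)) e :
  lc (lcomb c b) e = \sum_(p <- zip c b) p.1 * lc p.2 e.
Proof.
rewrite /lcomb lc_sum big_map; apply: eq_bigr => p _; exact: lc_scale.
Qed.

Lemma lmulC (x y : laur F) : lmul x y = lmul y x.
Proof. by rewrite /lmul addnC mulrC. Qed.

Lemma lmul_equiv (x x' y : laur F) : lequiv x x' -> lequiv (lmul x y) (lmul x' y).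
Proof.
rewrite /lequiv /lmul /= => /eqP H; apply/eqP.
rewrite !exprD.
have -> : x.2 * y.2 * ('X^(x'.1) * 'X^(y.1)) = (x.2 * 'X^(x'.1)) * (y.2 * 'X^(y.1)) by ring.
rewrite H; ring.
Qed.

Lemma lc_mul_nz (x y : laur F) e : lc (lmul x y) e != 0 ->
  exists e1 e2, [/\ e = e1 + e2, lc x e1 != 0 & lc y e2 != 0].
Proof.
rewrite {1}/lc /lmul /=; case: ifP => He; last by rewrite eqxx.
rewrite coefM => Hs.
have [j Hj] : exists j : 'I_(absz (e + (x.1 + y.1)%N%:Z)).+1,
   x.2`_j * y.2`_(absz (e + (x.1 + y.1)%N%:Z) - j) != 0.
  apply/existsP; apply: contraR Hs; rewrite negb_exists => /forallP H.
  by apply/eqP; apply: big1 => i _; apply/eqP; move: (H i); rewrite negbK.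
exists (j%:Z - (x.1)%:Z), ((subn (absz (e + (x.1 + y.1)%N%:Z)) j)%:Z - (y.1)%:Z).
rewrite !lcE; move: Hj; rewrite mulf_eq0 negb_or => /andP[-> ->]; split=> //.
have := ltn_ord j; lia.
Qed.

Definition mono (a : int) : laur F :=
  if 0 <= a then (0%N, 'X^(absz a)) else (absz a, 1).

Lemma lc_mono a e : lc (mono a) e = (e == a)%:R.
Proof.
rewrite /mono; case: ifP => Ha; rewrite /lc /=.
  case: ifP => He; rewrite ?coefXn.
    by congr (_%:R); case: eqP => H1; case: eqP => H2 //; exfalso; lia.
  by have -> : (e == a) = false by apply/negbTE; lia.
case: ifP => He; rewrite ?coef1.
  by congr (_%:R); case: eqP => H1; case: eqP => H2 //; exfalso; lia.
by have -> : (e == a) = false by apply/negbTE; lia.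
Qed.

Lemma lc_mono_mul a (y : laur F) e : lc (lmul (mono a) y) e = lc y (e - a).
Proof.
rewrite /mono; case: ifP => Ha; rewrite /lmul /lc /=.
  rewrite add0n coefXnM.
  case: ifP => H1.
    case: ifP => H2.
      have -> : (0 <= e - a + (y.1)%:Z) = false by apply/negbTE; lia.
      by [].
    have -> : (0 <= e - a + (y.1)%:Z) = true by lia.
    congr (_ `_ _); lia.
  by have -> : (0 <= e - a + (y.1)%:Z) = false by apply/negbTE; lia.
rewrite mul1r.
have -> : (e + (absz a + y.1)%N%:Z) = e - a + (y.1)%:Z by lia.
by [].
Qed.

End LC.
Section Colon.
Variable F : fieldType.
Variable L : seq nat.

Definition Gam (e : int) : bool := (0 <= e) && (absz e \notin L).
Definition Om (e : int) : bool := (0 <= e) || (absz (- e - 1) \in L).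
Fixpoint KE (k : nat) (s : int) : Prop :=
  if k is k'.+1 then exists a b, [/\ s = a + b, Om a & KE k' b] else s = 0.

Lemma lc_nz_size (x : laur F) e : lc x e != 0 ->
  [/\ 0 <= e + (x.1)%:Z, (absz (e + (x.1)%:Z)%R < size x.2)%N & x.2`_(absz (e + (x.1)%:Z)) != 0].
Proof.
rewrite /lc; case: ifP => H; last by rewrite eqxx.
move=> Hn; split => //; rewrite ltnNge; apply: contra Hn => Hs.
by rewrite nth_default.
Qed.

Lemma kGammaP (x : laur F) : reflect (forall e, lc x e != 0 -> Gam e) (in_kGamma L x).
Proof.
apply: (iffP allP) => H.
  move=> e /lc_nz_size [H1 H2 H3].
  have := H _ (etrans (mem_iota 0 _ _) H2); rewrite H3 /= => /andP[H4 H5].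
  rewrite /Gam; apply/andP; split; first by lia.
  by have -> : absz e = subn (absz (e + (x.1)%:Z)) x.1 by lia.
move=> i _; apply/implyP => Hi.
have := H (i%:Z - (x.1)%:Z); rewrite lcE => /(_ Hi) /andP[H1 H2].
apply/andP; split; first by lia.
by have -> : (i - x.1)%N = absz (i%:Z - (x.1)%:Z) by lia.
Qed.

Lemma omegaP (x : laur F) : reflect (forall e, lc x e != 0 -> Om e) (in_omega L x).
Proof.
apply: (iffP allP) => H.
  move=> e /lc_nz_size [H1 H2 H3].
  have := H _ (etrans (mem_iota 0 _ _) H2); rewrite H3 /= => /orP[H4|H5].
    by rewrite /Om; apply/orP; left; lia.
  rewrite /Om; apply/orP; case: (boolP (0 <= e)) => He; first by left.
  right; by have -> : absz (- e - 1) = (subn x.1 (absz (e + (x.1)%:Z))).-1 by lia.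
move=> i _; apply/implyP => Hi.
have := H (i%:Z - (x.1)%:Z); rewrite lcE => /(_ Hi) /orP[H1|H2].
  by apply/orP; left; lia.
case: (leqP x.1 i) => Hx; first by apply/orP; left.
apply/orP; right.
by have -> : (x.1 - i).-1 = absz (- (i%:Z - (x.1)%:Z) - 1) by lia.
Qed.

Lemma lprod_supp (r : seq (laur F)) e :
  all (in_omega L) r -> lc (lprod r) e != 0 -> KE (size r) e.
Proof.
elim: r e => [|x r IH] e /=.
  by move=> _; rewrite lc_one; case: (e =P 0) => // _ /=; rewrite eqxx.
move=> /andP[Hx Hr] /lc_mul_nz [e1 [e2 [-> H1 H2]]].
exists e1, e2; split => //; first exact: (omegaP _ Hx).
exact: IH.
Qed.

Lemma lsum_supp (s : seq (laur F)) e : lc (lsum s) e != 0 ->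
  exists2 x, x \in s & lc x e != 0.
Proof.
elim: s => [|x s IH] /=; first by rewrite lc_zero eqxx.
rewrite lc_add; case: (boolP (lc x e == 0)) => [/eqP ->|Hx _]; last first.
  by exists x => //; rewrite mem_head.
rewrite add0r => /IH [y Hy Hy']; exists y => //; by rewrite in_cons Hy orbT.
Qed.

Lemma lc_lprod_mono (r : seq int) e :
  lc (lprod (map (mono F) r)) e = (e == \sum_(a <- r) a)%:R.
Proof.
elim: r e => [|a r IH] e /=; first by rewrite lc_one big_nil.
rewrite lc_mono_mul IH big_cons.
congr (_%:R); set S1 := (\sum_(a0 <- r) a0); case: eqP => H1; case: eqP => H2 //; exfalso; lia.
Qed.

Lemma KE_list k s : KE k s -> exists r : seq int,
  [/\ size r = k, all Om r & s = \sum_(a <- r) a].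
Proof.
elim: k s => [|k IH] s /=; first by move=> ->; exists [::]; rewrite big_nil.
move=> [a [b [-> Ha /IH [r [Hs Hr ->]]]]].
by exists (a :: r); rewrite /= Hs Ha Hr big_cons.
Qed.

Lemma mono_omega a : Om a -> in_omega L (mono F a).
Proof. move=> Ha; apply/omegaP => e; rewrite lc_mono; case: (e =P a) => [-> //|_] /=; by rewrite eqxx. Qed.

Lemma colonP k (x : laur F) :
  in_colon L k x <-> (forall e, lc x e != 0 -> forall s, KE k s -> Gam (e + s)).
Proof.
split.
  move=> H e He s /KE_list [r [Hsz Hr Hs]].
  pose y := lsum (map (@lprod F) [:: map (mono F) r]).
  have Hy : in_omega_pow L k y.
    exists [:: map (mono F) r]; split; last by apply/lequivP.
    rewrite /= andbT size_map Hsz eqxx /=.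
    by apply/allP => z /mapP [a Ha ->]; apply: mono_omega; move/allP: Hr; apply.
  have := H y Hy; move/kGammaP; apply.
  rewrite lmulC.
  have Hym : lequiv y (mono F s).
    apply/lequivP => e'; rewrite /y /= lc_add lc_zero addr0 lc_lprod_mono lc_mono.
    by rewrite Hs.
  move/lequivP: (lmul_equiv x Hym) => ->.
  by rewrite lc_mono_mul addrK.
move=> H y [ss [Hss Heq]]; apply/kGammaP => e /lc_mul_nz [e1 [e2 [-> H1 H2]]].
apply: (H _ H1).
move/lequivP: Heq => Heq; rewrite Heq in H2.
have [z /mapP [r Hr ->] Hz] := lsum_supp H2.
move/allP: Hss => /(_ r Hr) /andP [/eqP <- Hr'].
exact: lprod_supp.
Qed.

End Colon.
Section Comb.
Variable L : seq nat.
Variable Fr : nat.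
Hypothesis HFr : Fr \in L.
Hypothesis Hmax : forall l, l \in L -> (l <= Fr)%N.
Hypothesis H0 : 0%N \notin L.

Fixpoint inS (j t : nat) : Prop :=
  if j is j'.+1 then exists l t', [/\ l \in L, inS j' t' & t = (l + t')%N] else t = 0%N.

Lemma inS_bound j t : inS j t -> (j <= t <= j * Fr)%N.
Proof.
elim: j t => [|j IH] t /=; first by move=> ->.
move=> [l [t' [Hl /IH Ht ->]]].
have := Hmax Hl; have : l != 0%N by apply: contraNneq H0 => <-.
rewrite mulSn; lia.
Qed.

Definition C (k : nat) (s : int) : Prop :=
  if k is k'.+1 then
    (exists t, inS k t /\ s = - (t + k)%N%:Z) \/ (- (k' * (Fr + 1))%N%:Z <= s)
  else s = 0.

Lemma Om_cases a : Om L a -> (0 <= a) \/ (exists l, l \in L /\ a = - (l.+1)%:Z).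
Proof.
case/orP => [H|H]; first by left.
case: (boolP (0 <= a)) => Ha; first by left.
right; exists (absz (- a - 1)); split => //; lia.
Qed.

Lemma KE_C k s : KE L k s <-> C k s.
Proof.
elim: k s => [|k IH] s; first by [].
split.
  move=> [a [b [-> Ha /IH Hb]]].
  case: (Om_cases Ha) => [Ha0|[l [Hl ->]]]; move: Hb; rewrite /C; case: k IH => [|k] IH.
  - by move=> ->; right; rewrite mul0n; lia.
  - move=> [[t [Ht ->]]|Hb]; right.
      have := inS_bound Ht; rewrite !mulSn; lia.
    move: Hb; rewrite !mulSn; lia.
  - by move=> ->; left; exists l; split; [exists l, 0%N; split; rewrite ?addn0 | lia].
  - have := Hmax Hl => Hl'.
    move=> [[t [Ht ->]]|Hb].
      left; exists (l + t)%N; split; [by exists l, t | lia].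
    right; move: Hb; rewrite !mulSn; lia.
rewrite /C; move=> [[t [[l [t' [Hl Ht' ->]]] ->]]|Hs].
  exists (- (l.+1)%:Z), (- (t' + k)%N%:Z); split.
  - lia.
  - apply/orP; right; have -> : absz (- - (l.+1)%:Z - 1) = l by lia. exact: Hl.
  - apply/IH; case: k IH Ht' => [|k] IH Ht'; first by move: Ht' => /= ->.
    by left; exists t'.
case: k IH Hs => [|k] IH Hs.
  exists s, 0; split; [lia | apply/orP; left; lia | by []].
exists (- (Fr.+1)%:Z), (s + (Fr.+1)%:Z); split.
- lia.
- apply/orP; right; have -> : absz (- - (Fr.+1)%:Z - 1) = Fr by lia. exact: HFr.
- apply/IH; right; move: Hs; rewrite mulSn; lia.
Qed.

Lemma iter_sumsetP j x : reflect (inS j.+1 x) (x \in iter_sumset j L).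
Proof.
elim: j x => [|j IH] x /=.
  rewrite mem_undup; apply: (iffP idP).
    by move=> Hx; exists x, 0%N; rewrite addn0.
  by move=> [l [t' [Hl -> ->]]]; rewrite addn0.
rewrite /sumset mem_undup; apply: (iffP allpairsP).
  by move=> [[a b] /= [Ha Hb ->]]; exists a, b; split => //; apply/IH.
by move=> [l [t' [Hl /IH Ht ->]]]; exists (l, t').
Qed.

Definition badb (k e : nat) : bool :=
  (e \notin L) && ((e < k * Fr + k)%N || ((k <= e)%N && ((e - k)%N \in iter_sumset k L))).

Lemma badP k e : (1 <= k)%N -> e \notin L ->
  reflect (exists s, KE L k s /\ ~~ Gam L (e%:Z + s)) (badb k e).
Proof.
case: k => [//|k] _ He; rewrite /badb He andTb.
apply: (iffP idP).
  case/orP => [Hlt|/andP [Hke /iter_sumsetP [l [t [Hl Ht Het]]]]].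
    exists (Fr%:Z - e%:Z); split.
      apply/KE_C; right; move: Hlt; rewrite mulSn; lia.
    rewrite /Gam; have -> : e%:Z + (Fr%:Z - e%:Z) = Fr%:Z by ring.
    by rewrite /= HFr.
  exists (- (t + k.+1)%N%:Z); split.
    by apply/KE_C; left; exists t.
  rewrite /Gam; have -> : e%:Z + - (t + k.+1)%N%:Z = l%:Z by lia.
  by rewrite /= Hl.
move=> [s [/KE_C Hs HG]].
move: HG; rewrite /Gam negb_and negbK => HG.
case: (boolP (0 <= e%:Z + s)) => Hpos; last first.
  apply/orP; left; case: Hs => [[t [Ht Hst]]|Hs].
    subst s; have := inS_bound Ht; rewrite mulSn; lia.
  move: Hs; rewrite !mulSn; lia.
rewrite Hpos /= in HG.
case: Hs => [[t [Ht Hst]]|Hs].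
  subst s; apply/orP; right; apply/andP; split; first by lia.
  apply/iter_sumsetP; exists (absz (e%:Z + - (t + k.+1)%N%:Z)), t; split => //; lia.
apply/orP; left; have := Hmax HG; move: Hs; rewrite !mulSn; lia.
Qed.

End Comb.
Section Comb2.
Local Open Scope nat_scope.
Variable L : seq nat.
Variable Fr : nat.
Hypothesis HFr : Fr \in L.
Hypothesis Hmax : forall l, l \in L -> l <= Fr.
Hypothesis H0 : 0 \notin L.
Hypothesis Hcl : forall a b : nat, a \notin L -> b \notin L -> (a + b) \notin L.
Hypothesis H1 : 1 \in L.
Hypothesis H2 : 2 \in L.

Lemma gt_Fr x : Fr < x -> x \notin L.
Proof. by move=> Hx; apply/negP => /Hmax; rewrite leqNgt Hx. Qed.

Lemma two_sum m : 2 <= m -> m < Fr -> exists l1 l2, [/\ l1 \in L, l2 \in L & m = l1 + l2].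
Proof.
have [mu /andP [Hmu0 HmuL] Hmumin] :
  {mu : nat | (0 < mu) && (mu \notin L) & forall n, (0 < n) && (n \notin L) -> mu <= n}.
  apply: find_ex_minn; exists Fr.+1; rewrite /=; exact: gt_Fr.
have Hlow : forall j, 0 < j < mu -> j \in L.
  move=> j /andP [Hj1 Hj2]; apply/negPn/negP => Hj.
  by have := Hmumin j; rewrite Hj1 Hj /= => /(_ isT); rewrite leqNgt Hj2.
have Hmu3 : 3 <= mu.
  case: mu Hmu0 HmuL {Hmumin Hlow} => [|[|[|mu]]] //= _; by rewrite ?H1 ?H2.
elim/ltn_ind: m => m IHm Hm2 HmF.
case: (boolP (has (fun l => (l < m) && ((m - l) \in L)) L)) => [/hasP [l Hl /andP [Hlm Hml]]|Hno].
  by exists l, (m - l); split => //; rewrite subnKC // ltnW.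
have H : forall l, l \in L -> l < m -> (m - l) \notin L.
  move=> l Hl Hlm; apply/negP => Hml; move/negP: Hno; apply; apply/hasP; exists l => //.
  by rewrite Hlm.
have Hm1 : mu < m.
  have := H 1 H1; rewrite (leq_trans _ Hm2) // => /(_ isT) Hm1.
  have := Hmumin (m - 1); rewrite Hm1 subn_gt0 (leq_trans _ Hm2) //= => /(_ isT).
  move=> ?; lia.
have Hall : forall x, m < x -> x \notin L.
  elim/ltn_ind => x IHx Hx.
  case: (ltngtP (m + mu) x) => Hc.
  - have -> : x = (x - mu) + mu by lia.
    apply: Hcl => //; apply: IHx; lia.
  - pose j := m + mu - x.
    have Hj : j \in L by apply: Hlow; rewrite /j; lia.
    have := H j Hj; rewrite /j; have -> : m - (m + mu - x) = x - mu by lia.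
    move=> /(_ _) Hxm; have {}Hxm := Hxm ltac:(lia).
    have -> : x = (x - mu) + mu by lia.
    exact: Hcl.
  - rewrite -Hc.
    case: (boolP (m \in L)) => HmL; last exact: Hcl.
    have Hmmu : (m - mu) \in L.
      apply/negPn/negP => Hc2; have := Hcl Hc2 HmuL.
      by rewrite subnK ?HmL // ltnW.
    have Hmmu2 : 2 <= m - mu.
      case E : (m - mu) => [|[|n]] //.
        by move: Hmmu; rewrite E (negbTE H0).
      have Hm2' : m - 2 = mu - 1 by lia.
      have := H 2 H2; rewrite Hm2' (Hlow (mu - 1)) //; last by lia.
      by move=> /(_ ltac:(lia)).
    have [l1 [l2 [Hl1 Hl2 Hs]]] := IHm (m - mu) ltac:(lia) Hmmu2 ltac:(lia).
    have Hl10 : 0 < l1 by case: l1 Hl1 {Hs} => [|//]; rewrite (negbTE H0).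
    have Hl20 : 0 < l2 by case: l2 Hl2 {Hs} => [|//]; rewrite (negbTE H0).
    have := Hcl (H l1 Hl1 ltac:(lia)) (H l2 Hl2 ltac:(lia)).
    by have -> : m - l1 + (m - l2) = m + mu by lia.
by have := Hall Fr HmF; rewrite HFr.
Qed.

Lemma inS_diag j : inS L j j.
Proof. elim: j => [|j IH] //=; by exists 1, j. Qed.

Lemma sumset_interval k x : 1 <= k -> k.+1 <= x -> (x < k * Fr \/ x = k.+1) -> inS L k.+1 x.
Proof.
have HF2 : 2 <= Fr by apply: Hmax.
elim: k x => [//|k IH] x _ Hx Hr.
case: k IH Hx Hr => [|k] IH Hx Hr.
  case: Hr => [Hr|->]; last exact: inS_diag.
  rewrite mul1n in Hr.
  have [l1 [l2 [Hl1 Hl2 ->]]] := two_sum Hx Hr.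
  by exists l1, l2; split => //; exists l2, 0; rewrite addn0.
have IH' := IH _ isT.
case: (leqP x (k.+1 * Fr)) => Hx1.
  exists 1, (x - 1); split => //; last by lia.
  apply: IH'; first by lia.
  case: Hr => [Hr|Hr]; last by right; lia.
  case: (ltnP (x - 1) (k.+1 * Fr)) => Hy; first by left.
  by lia.
case: Hr => [Hr|Hr]; last first.
  exists 1, (x - 1); split => //; last by lia.
  by apply: IH'; [lia | right; lia].
case: (leqP (Fr + k.+2) x) => Hx2.
  exists Fr, (x - Fr); split => //; last by lia.
  apply: IH'; first by lia.
  left; move: Hr; rewrite mulSn; lia.
case: k IH IH' Hx Hx1 Hr Hx2 => [|k] IH IH' Hx Hx1 Hr Hx2; last first.
  exfalso; move: Hx1 Hx2; rewrite !mulSn.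
  have : 2 * k.+1 <= k.+1 * Fr by rewrite mulnC leq_mul2l HF2 orbT.
  lia.
have Hx' : x = Fr.+1 by move: Hx1 Hx2; rewrite mul1n; lia.
case: (eqVneq x 3) => [->|Hx3]; first exact: inS_diag.
exists 2, (x - 2); split => //; last by lia.
case: (ltnP 2 (x - 2)) => Hy.
  by apply: IH'; [lia | left; rewrite mul1n; lia].
by apply: IH'; [lia | right; lia].
Qed.

End Comb2.
Lemma count_mem_iota (s : seq nat) M : uniq s -> (forall x, x \in s -> (x < M)%N) ->
  count (mem s) (iota 0 M) = size s.
Proof.
move=> Hu Hb; rewrite -size_filter; apply: perm_size; apply: uniq_perm.
- by apply: filter_uniq; apply: iota_uniq.
- exact: Hu.
move=> x; rewrite mem_filter mem_iota add0n /=.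
by case: (boolP (x \in s)) => Hx //=; rewrite Hb.
Qed.

Lemma count_ge a n : count (fun x => (a <= x)%N) (iota 0 n) = (n - a)%N.
Proof.
elim: n => [|n IH] //.
rewrite -addn1 iotaD count_cat IH /= add0n addn0.
case: (leqP a n) => H; lia.
Qed.

Section Count.
Local Open Scope nat_scope.
Variable L : seq nat.
Variable Fr : nat.
Hypothesis HFr : Fr \in L.
Hypothesis Hmax : forall l, l \in L -> l <= Fr.
Hypothesis H0 : 0 \notin L.
Hypothesis Hcl : forall a b : nat, a \notin L -> b \notin L -> (a + b) \notin L.
Hypothesis H1 : 1 \in L.
Hypothesis H2 : 2 \in L.
Hypothesis Hu : uniq L.
Variable k : nat.
Hypothesis Hk : 1 <= k.

Definition Nb := k * Fr + k + Fr.+1.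

Lemma bad_lt e : badb L Fr k e -> e < Nb.
Proof.
rewrite /badb /Nb => /andP [_ /orP [H|/andP [Hke /iter_sumsetP /(inS_bound HFr Hmax H0) /andP [_ Hb]]]].
  lia.
move: Hb; rewrite mulSn; lia.
Qed.

Lemma count_bad : count (badb L Fr k) (iota 0 Nb) + size L =
   size (iter_sumset k L) + (2 * k + 1).
Proof.
have HF2 : 2 <= Fr by apply: Hmax.
have HkF : k.+1 <= k * Fr.
  have : 2 * k <= k * Fr by rewrite mulnC leq_mul2l HF2 orbT.
  lia.
have HFk : Fr <= k * Fr by rewrite leq_pmull.
set A := k * Fr + k.
set S := iter_sumset k L.
have HS : forall x, x \in S -> k.+1 <= x <= k.+1 * Fr.
  by move=> x /iter_sumsetP /(inS_bound HFr Hmax H0).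
rewrite /Nb -/A iotaD count_cat add0n.
have E1 : count (badb L Fr k) (iota 0 A) = count (predC (mem L)) (iota 0 A).
  apply: eq_in_count => e; rewrite mem_iota add0n /= => He.
  by rewrite /badb He orTb andbT.
have E2 : count (mem L) (iota 0 A) = size L.
  apply: count_mem_iota => // x /Hmax; rewrite /A; lia.
have E3 : count (predC (mem L)) (iota 0 A) = A - size L.
  have := count_predC (mem L) (iota 0 A); rewrite size_iota E2; lia.
have E4 : count (badb L Fr k) (iota A Fr.+1) = count (mem S) (iota (k * Fr) Fr.+1).
  rewrite /A addnC iotaDl count_map; apply: eq_in_count => y.
  rewrite mem_iota /= => /andP [Hy1 Hy2].
  rewrite /badb (gt_Fr Hmax); last first.
    have : Fr <= k * Fr by rewrite leq_pmull.
    lia.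
  have -> : (k + y < k * Fr + k) = false by apply/negbTE; lia.
  by rewrite leq_addr /= addKn.
have E5 : size S = count (mem S) (iota 0 (k * Fr)) + count (mem S) (iota (k * Fr) Fr.+1).
  rewrite -(add0n (k * Fr)) -count_cat -iotaD.
  apply/esym/count_mem_iota.
    by rewrite /S; case: (k) => [|j] /=; apply: undup_uniq.
  move=> x /HS; rewrite mulSn; lia.
have E6 : count (mem S) (iota 0 (k * Fr)) = k * Fr - k.+1.
  rewrite -count_ge; apply: eq_in_count => x; rewrite mem_iota add0n /= => Hx.
  apply/idP/idP => [/HS /andP [] //|Hx2].
  apply/iter_sumsetP; apply: (sumset_interval HFr Hmax H0 Hcl H1 H2) => //.
  by left.
rewrite E1 E3 E4 E5 E6.
have := count_size (mem L) (iota 0 A); rewrite size_iota E2.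
lia.
Qed.

End Count.
Lemma big_zip (F : fieldType) (c : seq F) (b : seq (laur F)) (f : laur F -> F) :
  size c = size b ->
  \sum_(p <- zip c b) p.1 * f p.2 = \sum_(i < size c) c`_i * f (nth (lzero F) b i).
Proof.
elim: c b => [|x c IH] [|y b] //=; first by rewrite big_nil big_ord0.
by move=> [Hs]; rewrite big_cons big_ord_recl IH.
Qed.

Lemma lc_comb_idx (F : fieldType) (c : seq F) (b : seq (laur F)) e : size c = size b ->
  lc (lcomb c b) e = \sum_(i < size c) c`_i * lc (nth (lzero F) b i) e.
Proof. by move=> Hs; rewrite lc_comb (big_zip (fun z => lc z e)). Qed.

Lemma nth_row_seq (F : fieldType) n (u : 'rV[F]_n) (j : 'I_n) :
  [seq u 0 i | i <- enum 'I_n]`_j = u 0 j.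
Proof.
rewrite (nth_map j); last by rewrite size_enum_ord.
by congr (u 0 _); apply: val_inj; rewrite /= nth_enum_ord.
Qed.

Section Main.
Variable F : fieldType.
Variable L : seq nat.
Variable Fr : nat.
Hypothesis HFr : Fr \in L.
Hypothesis Hmax : forall l, l \in L -> (l <= Fr)%N.
Hypothesis H0 : 0%N \notin L.
Hypothesis Hcl : forall a b : nat, a \notin L -> b \notin L -> (a + b)%N \notin L.
Hypothesis H1 : 1%N \in L.
Hypothesis H2 : 2%N \in L.
Hypothesis Hu : uniq L.
Variable k : nat.
Hypothesis Hk : (1 <= k)%N.

Definition Dl := [seq e <- iota 0 (Nb Fr k) | badb L Fr k e].
Definition b0 := map (fun d : nat => mono F d%:Z) Dl.

Lemma Dl_uniq : uniq Dl.
Proof. by apply: filter_uniq; apply: iota_uniq. Qed.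

Lemma mem_Dl d : (d \in Dl) = badb L Fr k d.
Proof.
rewrite mem_filter mem_iota add0n /=.
case: (boolP (badb L Fr k d)) => // Hb.
by rewrite (bad_lt HFr Hmax H0 H1 H2 Hu Hk Hb).
Qed.

Lemma B2 (y : laur F) : in_colon L k y -> forall d, badb L Fr k d -> lc y d%:Z = 0.
Proof.
move=> /colonP Hy d Hd; apply/eqP; apply: contraT => Hnz.
have HdL : d \notin L by move: Hd => /andP [].
have [s [Hs HG]] := badP HFr Hmax H0 Hk HdL Hd.
by move: HG; rewrite (Hy _ Hnz s Hs).
Qed.

Lemma B3 (x : laur F) : in_kGamma L x -> (forall d, badb L Fr k d -> lc x d%:Z = 0) ->
  in_colon L k x.
Proof.
move=> /kGammaP Hx Hd; apply/colonP => e He s Hs.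
have /andP [He0 HeL] := Hx _ He.
have Ee : e = (absz e)%:Z by lia.
case: (boolP (badb L Fr k (absz e))) => Hb.
  by move: He; rewrite Ee Hd // eqxx.
apply/negPn/negP => HG; move/negP: Hb; apply.
apply/(badP HFr Hmax H0 Hk HeL); exists s; split => //; by rewrite -Ee.
Qed.

Lemma nth_b0 i : (i < size Dl)%N -> nth (lzero F) b0 i = mono F ((nth 0%N Dl i))%:Z.
Proof. by move=> Hi; rewrite /b0 (nth_map 0%N). Qed.

Lemma lc_b0 (c : seq F) e : size c = size Dl ->
  lc (lcomb c b0) e = \sum_(i < size Dl) c`_i * (e == ((nth 0%N Dl i))%:Z)%:R.
Proof.
move=> Hs; rewrite lc_comb_idx; last by rewrite /b0 size_map.
rewrite Hs; apply: eq_bigr => i _; by rewrite nth_b0 // lc_mono.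
Qed.

Lemma lc_b0_at (c : seq F) j : size c = size Dl -> (j < size Dl)%N ->
  lc (lcomb c b0) ((nth 0%N Dl j))%:Z = c`_j.
Proof.
move=> Hs Hj; rewrite lc_b0 // (bigD1 (Ordinal Hj)) //= eqxx mulr1 big1 ?addr0 //.
move=> i Hi; rewrite eqz_nat nth_uniq ?Dl_uniq //.
have -> : (j == i) = false.
  by apply/negbTE; apply: contra Hi => /eqP Hji; apply/eqP/val_inj => /=; rewrite Hji.
by rewrite mulr0.
Qed.

Lemma lc_b0_out (c : seq F) e : size c = size Dl ->
  (forall i, (i < size Dl)%N -> e != ((nth 0%N Dl i))%:Z) -> lc (lcomb c b0) e = 0.
Proof.
move=> Hs He; rewrite lc_b0 // big1 // => i _.
by rewrite (negbTE (He i (ltn_ord i))) mulr0.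
Qed.

Lemma kGamma_comb (c : seq F) (b : seq (laur F)) : size c = size b ->
  (forall v, v \in b -> in_kGamma L v) -> in_kGamma L (lcomb c b).
Proof.
move=> Hs Hb; apply/kGammaP => e; rewrite lc_comb_idx // => Hnz.
have [i _ Hi] : exists2 i : 'I_(size c), true & c`_i * lc (nth (lzero F) b i) e != 0.
  apply/exists_inP; apply: contraR Hnz => /exists_inPn H.
  by apply/eqP; apply: big1 => i _; apply/eqP; move: (H i isT); rewrite negbK.
move: Hi; rewrite mulf_eq0 negb_or => /andP [_ Hi].
have Hib : (i < size b)%N by rewrite -Hs.
by move/kGammaP: (Hb _ (mem_nth (lzero F) Hib)); apply.
Qed.

Lemma dim_exists : is_dk F L k (size Dl).
Proof.
exists b0; split.
- by rewrite /b0 size_map.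
- move=> v /mapP [d Hd ->]; apply/kGammaP => e; rewrite lc_mono.
  case: (e =P d%:Z) => [->|_] /=; last by rewrite eqxx.
  move=> _; rewrite /Gam /=; by move: Hd; rewrite mem_Dl => /andP [].
- move=> x Hx.
  pose c := [seq lc x (d%:Z) | d <- Dl].
  have Hc : size c = size Dl by rewrite size_map.
  exists c, (ladd x (lscale (-1) (lcomb c b0))); split => //.
    apply: B3.
      apply/kGammaP => e; rewrite lc_add lc_scale.
      case: (boolP (lc x e == 0)) => [/eqP ->|Hxe _]; last by move/kGammaP: Hx; apply.
      rewrite add0r mulN1r oppr_eq0 lc_b0 // => Hs.
      have [i _ Hi] : exists2 i : 'I_(size Dl), true & c`_i * (e == ((nth 0%N Dl i))%:Z)%:R != 0.
        apply/exists_inP; apply: contraR Hs => /exists_inPn H.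
        by apply/eqP; apply: big1 => i _; apply/eqP; move: (H i isT); rewrite negbK.
      move: Hi; case: (e =P _) => [-> _|_]; last by rewrite mulr0 eqxx.
      have : (nth 0%N Dl i) \in Dl by apply: mem_nth.
      by rewrite mem_Dl /Gam /= => /andP [].
    move=> d Hd.
    have : d \in Dl by rewrite mem_Dl.
    move=> /(nthP 0%N) [j Hj <-].
    rewrite lc_add lc_scale lc_b0_at // /c (nth_map 0%N) //.
    by rewrite mulN1r subrr.
  apply/lequivP => e; rewrite !lc_add lc_scale; ring.
- move=> c Hc HB i.
  case: (ltnP i (size Dl)) => Hi; last by rewrite nth_default // Hc.
  rewrite -lc_b0_at //; apply: (B2 HB); rewrite -mem_Dl; exact: mem_nth.
Qed.

Lemma dim_unique n : is_dk F L k n -> n = size Dl.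
Proof.
move=> [b [Hsb Hb Hspan Hind]].
set m := size Dl.
pose M := \matrix_(i < n, j < m) lc (nth (lzero F) b i) ((nth 0%N Dl j))%:Z.
have Hfree : row_free M.
  rewrite -kermx_eq0; apply/eqP/row_matrixP => i; rewrite row0.
  set u := row i (kermx M).
  have Hu0 : u *m M = 0 by rewrite /u -row_mul mulmx_ker row0.
  pose c := [seq u 0 i | i <- enum 'I_n].
  have Hcs : size c = n by rewrite size_map size_enum_ord.
  have Hcomb : forall e, lc (lcomb c b) e = \sum_(j < n) u 0 j * lc (nth (lzero F) b j) e.
    move=> e; rewrite lc_comb_idx; last by rewrite Hcs Hsb.
    rewrite Hcs; apply: eq_bigr => j _; by rewrite nth_row_seq.
  have HB : in_colon L k (lcomb c b).
    apply: B3.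
      apply: kGamma_comb => //; by rewrite Hcs Hsb.
    move=> d Hd; rewrite Hcomb.
    have : d \in Dl by rewrite mem_Dl.
    move=> /(nthP 0%N) [j Hj <-].
    transitivity ((u *m M) 0 (Ordinal Hj)); last by rewrite Hu0 mxE.
    rewrite mxE; apply: eq_bigr => l _; congr (_ * _); by rewrite mxE.
  apply/rowP => j.
  have := Hind c Hcs HB j; rewrite nth_row_seq => ->.
  by rewrite mxE.
have Hfull : row_full M.
  rewrite -sub1mx; apply/row_subP => j.
  have Hmono : in_kGamma L (mono F ((nth 0%N Dl j))%:Z).
    apply/kGammaP => e; rewrite lc_mono; case: (e =P _) => [->|_] /=; last by rewrite eqxx.
    move=> _; rewrite /Gam /=.
    have : (nth 0%N Dl j) \in Dl by apply: mem_nth.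
    by rewrite mem_Dl => /andP [].
  have [c [y [Hcs Hy Heq]]] := Hspan _ Hmono.
  apply/submxP; exists (\row_(i < n) c`_i).
  apply/rowP => j'; rewrite !mxE.
  move/lequivP: Heq => /(_ ((nth 0%N Dl j'))%:Z); rewrite lc_mono lc_add.
  rewrite (B2 Hy); last by rewrite -mem_Dl; apply: mem_nth.
  rewrite addr0 lc_comb_idx; last by rewrite Hcs Hsb.
  have Ejj : (j == j') = (nth 0%N Dl j' == nth 0%N Dl j :> int).
    by rewrite eqz_nat nth_uniq ?Dl_uniq // eq_sym.
  rewrite Ejj => ->.
  rewrite Hcs; apply: eq_bigr => i _; by rewrite !mxE.
move/eqP: Hfree => Hr1; move/eqP: Hfull => Hr2.
by rewrite -Hr1 Hr2.
Qed.

End Main.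
Lemma max_exists (L : seq nat) : L != [::] ->
  exists2 Fr, Fr \in L & forall l, l \in L -> (l <= Fr)%N.
Proof.
elim: L => [//|x L IH] _.
case: L IH => [|y L] IH.
  by exists x => [|l]; rewrite ?mem_head // mem_seq1 => /eqP ->.
have [Fr HF HFm] := IH isT.
exists (maxn x Fr).
  case: (leqP x Fr) => H.
    by rewrite in_cons HF orbT.
  exact: mem_head.
move=> l; rewrite in_cons => /orP [/eqP ->|Hl]; first exact: leq_maxl.
by apply: leq_trans (HFm _ Hl) (leq_maxr _ _).
Qed.

Theorem mainTheorem5 (F : closedFieldType) (L : seq nat) :
  [pchar F] =i pred0 ->
  numerical_gaps L ->
  (1 \in L)%N -> (2 \in L)%N ->            (* multiplicity >= 3 *)
  forall k : nat, (1 <= k)%N ->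
    (exists n : nat, is_dk F L k n) /\
    (forall n : nat, is_dk F L k n ->
       n%:Z = (size (iter_sumset k L))%:Z + (2 * k + 1)%:Z - (size L)%:Z
       /\ ((2 * k * size L)%:Z < n%:Z <->
           (2 * k + 1)%:Z * ((size L)%:Z - 1) < (size (iter_sumset k L))%:Z)).
Proof.
move=> _ [Hu H0 Hcl] H1 H2 k Hk.
have [Fr HFr Hmax] : exists2 Fr, Fr \in L & forall l, l \in L -> (l <= Fr)%N.
  by apply: max_exists; case: L H1 {Hu H0 Hcl H2}.
split; first by exists (size (Dl L Fr k)); apply: dim_exists.
move=> n Hn.
have En := dim_unique HFr Hmax H0 H1 H2 Hu Hk Hn.
have Hc := count_bad HFr Hmax H0 Hcl H1 H2 Hu Hk.
rewrite /Dl size_filter in En.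
rewrite -En in Hc.
move: Hc; set S := size (iter_sumset k L); set d := size L => Hc.
split; first lia.
split => H; nia.
Qed.
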